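(* Let $(a(l))_{l\ge0}$ be generated by SGG with activation probability $p\in[0,1]$ on a connected graph from an initial state $a(0)\ne\bar a$, and let $E_l=\mathbb E\|a(l)-\bar a\|^2$. Define $\eta_l=\mathbb E\big[R_{SGG}(a(l-1);p)-R_{RG}(a(l-1))\big]$ and $\beta_l=\eta_l/E_{l-1}$ if $E_{l-1}>0$, $\beta_l=0$ otherwise. Then for all $l\ge1$: $\beta_l\ge0$, $$E_l\le\big(\lambda_2(\overline W)-\beta_l\big)E_{l-1},\qquad E_l\le \|a(0)-\bar a\|^2\prod_{i=1}^l\big(\lambda_2(\overline W)-\beta_i\big)\le\|a(0)-\bar a\|^2\Big(\lambda_2(\overline W)-\min_{1\le i\le l}\beta_i\Big)^l,$$ and for every $\epsilon\in(0,1)$, $$\Pr\Big(\tfrac{\|a(l)-\bar a\|}{\|a(0)-\bar a\|}\ge\epsilon\Big)\le\epsilon^{-2}\Big(\lambda_2(\overline W)-\min_{1\le i\le l}\beta_i\Big)^l .$$ Consequently, if $\rho_l:=\lambda_2(\overline W)-\min_{1\le i\le l}\beta_i>0$ and $l\ge \dfrac{3\log\epsilon^{-1}}{\log \rho_l^{-1}}$, then $\Pr\big(\|a(l)-\bar a\|/\|a(0)-\bar a\|\ge\epsilon\big)\le\epsilon$; i.e. the $\epsilon$-averaging time of SGG is at most $3\log\epsilon^{-1}/\log\big(\lambda_2(\overline W)-\min_i\beta_i\big)^{-1}$.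
   Context: Connected undirected graph on $\mathcal V=\{1,\dots,N\}$, $N\ge2$, neighbour sets $\mathcal N_s$ (excluding $s$). $\bar a$ is the vector with all entries $\frac1N\sum_s a_s(0)$. SGG step: node $s$ uniform on $\mathcal V$; each $t\in\mathcal N_s$ independently active with probability $p$; partner $t^*$ maximises $(a_s(l-1)-a_t(l-1))^2$ over active neighbours, or is uniform on $\mathcal N_s$ if none is active; then $a_s(l)=a_{t^*}(l)=\frac12(a_s(l-1)+a_{t^*}(l-1))$, others unchanged. $R_{RG}(x)=\frac1{2N}\sum_{s}\frac1{|\mathcal N_s|}\sum_{t\in\mathcal N_s}(x_s-x_t)^2$; $R_{SGG}(x;p)=\frac1{2N}\sum_{s}\Big[\sum_{\emptyset\ne A\subseteq\mathcal N_s}p^{|A|}(1-p)^{|\mathcal N_s|-|A|}\max_{t\in A}(x_s-x_t)^2+(1-p)^{|\mathcal N_s|}\frac1{|\mathcal N_s|}\sum_{t\in\mathcal N_s}(x_s-x_t)^2\Big]$. Randomised gossip matrix: for $(s,t)$ with $t\in\mathcal N_s$, $W_{st}=I-\frac12(e_s-e_t)(e_s-e_t)^T$ ($e_i$ standard basis vectors), and $\overline W=\frac1N\sum_{s=1}^N\frac1{|\mathcal N_s|}\sum_{t\in\mathcal N_s}W_{st}$ is the expected one-step update matrix of randomised gossip (node $s$ uniform, partner uniform in $\mathcal N_s$). $\lambda_2(\overline W)$ denotes the second largest eigenvalue of the symmetric matrix $\overline W$. *)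

(* Defs.v *)
From Stdlib Require Import Reals Lra Lia List Arith Relations.
Import ListNotations.
Open Scope R_scope.

(* Vertices are 0 .. N-1; vectors are functions nat -> R (only indices < N matter). *)

Definition sumL {A : Type} (l : list A) (f : A -> R) : R :=
  fold_right (fun a acc => f a + acc) 0 l.

Definition prodL {A : Type} (l : list A) (f : A -> R) : R :=
  fold_right (fun a acc => f a * acc) 1 l.

(* maximum of f over a nonempty list (0 on the empty list, never used) *)
Fixpoint maxL {A : Type} (f : A -> R) (l : list A) : R :=
  match l with
  | [] => 0
  | [a] => f a
  | a :: l' => Rmax (f a) (maxL f l')
  end.

Fixpoint subsets (l : list nat) : list (list nat) :=
  match l with
  | [] => [[]]
  | x :: l' => let s := subsets l' in map (cons x) s ++ s
  end.

Definition nbrs (adj : nat -> nat -> bool) (N s : nat) : list nat :=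
  filter (adj s) (seq 0 N).

Definition simple_graph (adj : nat -> nat -> bool) : Prop :=
  (forall i j, adj i j = adj j i) /\ (forall i, adj i i = false).

Definition connected_graph (adj : nat -> nat -> bool) (N : nat) : Prop :=
  forall i j, (i < N)%nat -> (j < N)%nat ->
    clos_refl_trans nat (fun x y => (x < N)%nat /\ (y < N)%nat /\ adj x y = true) i j.

Definition avg (N : nat) (a0 : nat -> R) : R := sumL (seq 0 N) a0 / INR N.

Definition sqdist (N : nat) (a0 x : nat -> R) : R :=
  sumL (seq 0 N) (fun i => (x i - avg N a0) ^ 2).

Definition upd (x : nat -> R) (s t : nat) : nat -> R :=
  fun i => if (Nat.eqb i s || Nat.eqb i t)%bool then (x s + x t) / 2 else x i.

(* A valid tie-breaking selection rule: for a nonempty active set A, it returns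
   an element of A maximising (x_s - x_t)^2. *)
Definition valid_selector (sel : (nat -> R) -> nat -> list nat -> nat) : Prop :=
  forall x s A, A <> [] ->
    In (sel x s A) A /\ forall t, In t A -> (x s - x t) ^ 2 <= (x s - x (sel x s A)) ^ 2.

(* One SGG step from state x: list of (probability, next state) outcomes. *)
Definition sgg_step (N : nat) (adj : nat -> nat -> bool) (p : R)
    (sel : (nat -> R) -> nat -> list nat -> nat) (x : nat -> R)
    : list (R * (nat -> R)) :=
  flat_map (fun s =>
    let Ns := nbrs adj N s in
    flat_map (fun A =>
      match A with
      | [] => map (fun t => (/ INR N * (1 - p) ^ length Ns * / INR (length Ns), upd x s t)) Ns
      | _ :: _ => [(/ INR N * (p ^ length A * (1 - p) ^ (length Ns - length A)),
                    upd x s (sel x s A))]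
      end) (subsets Ns)) (seq 0 N).

Fixpoint sgg_dist (N : nat) (adj : nat -> nat -> bool) (p : R)
    (sel : (nat -> R) -> nat -> list nat -> nat) (a0 : nat -> R) (l : nat)
    : list (R * (nat -> R)) :=
  match l with
  | O => [(1, a0)]
  | S l' => flat_map (fun wx => map (fun wy => (fst wx * fst wy, snd wy))
                                  (sgg_step N adj p sel (snd wx)))
                     (sgg_dist N adj p sel a0 l')
  end.

Definition expect N adj p sel a0 (l : nat) (f : (nat -> R) -> R) : R :=
  sumL (sgg_dist N adj p sel a0 l) (fun wx => fst wx * f (snd wx)).

Definition Err N adj p sel a0 (l : nat) : R :=
  expect N adj p sel a0 l (sqdist N a0).

Definition R_RG (N : nat) (adj : nat -> nat -> bool) (x : nat -> R) : R :=
  / (2 * INR N) * sumL (seq 0 N) (fun s =>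
     / INR (length (nbrs adj N s)) * sumL (nbrs adj N s) (fun t => (x s - x t) ^ 2)).

Definition R_SGG (N : nat) (adj : nat -> nat -> bool) (p : R) (x : nat -> R) : R :=
  / (2 * INR N) * sumL (seq 0 N) (fun s =>
    let Ns := nbrs adj N s in
    sumL (subsets Ns) (fun A =>
       match A with
       | [] => 0
       | _ :: _ => p ^ length A * (1 - p) ^ (length Ns - length A)
                   * maxL (fun t => (x s - x t) ^ 2) A
       end)
    + (1 - p) ^ length Ns * (/ INR (length Ns) * sumL Ns (fun t => (x s - x t) ^ 2))).

Definition eta N adj p sel a0 (l : nat) : R :=
  expect N adj p sel a0 (l - 1) (fun x => R_SGG N adj p x - R_RG N adj x).

Definition beta N adj p sel a0 (l : nat) : R :=
  if Rlt_dec 0 (Err N adj p sel a0 (l - 1))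
  then eta N adj p sel a0 l / Err N adj p sel a0 (l - 1) else 0.

Definition min_beta N adj p sel a0 (l : nat) : R :=
  fold_right (fun i acc => Rmin (beta N adj p sel a0 i) acc)
             (beta N adj p sel a0 l) (seq 1 l).

Definition prob_ratio_ge N adj p sel a0 (l : nat) (eps : R) : R :=
  sumL (sgg_dist N adj p sel a0 l) (fun wx =>
    if Rle_dec eps (sqrt (sqdist N a0 (snd wx)) / sqrt (sqdist N a0 a0))
    then fst wx else 0).

Definition kron (i j : nat) : R := if Nat.eqb i j then 1 else 0.

Definition W_st (s t : nat) (i j : nat) : R :=
  kron i j - / 2 * ((kron i s - kron i t) * (kron j s - kron j t)).

Definition Wbar (N : nat) (adj : nat -> nat -> bool) (i j : nat) : R :=
  / INR N * sumL (seq 0 N) (fun s =>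
     / INR (length (nbrs adj N s)) * sumL (nbrs adj N s) (fun t => W_st s t i j)).

(* lam is the second largest eigenvalue (counted with multiplicity) of the
   symmetric N x N matrix M: M has an orthonormal eigenbasis v_0..v_{N-1}
   with eigenvalues mu_0 >= mu_1 >= ... >= mu_{N-1}, and lam = mu_1. *)
Definition is_lambda2 (N : nat) (M : nat -> nat -> R) (lam : R) : Prop :=
  exists (v : nat -> nat -> R) (mu : nat -> R),
    (forall k k', (k < N)%nat -> (k' < N)%nat ->
        sumL (seq 0 N) (fun i => v k i * v k' i) = kron k k') /\
    (forall k i, (k < N)%nat -> (i < N)%nat ->
        sumL (seq 0 N) (fun j => M i j * v k j) = mu k * v k i) /\
    (forall k, (S k < N)%nat -> mu (S k) <= mu k) /\
    lam = mu 1%nat.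

(* Main.v *)
Require Import Defs.
From Stdlib Require Import Reals Lra Lia List Arith Relations.
Import ListNotations.
Open Scope R_scope.

Module MC.
From mathcomp Require Import all_boot all_algebra Rstruct.
Import GRing.Theory.
Definition OC_stmt := forall N (v : nat -> nat -> R),
  (forall k k', (k < N)%coq_nat -> (k' < N)%coq_nat ->
     sumL (List.seq 0 N) (fun i => Rmult (v k i) (v k' i)) = kron k k') ->
  forall i j, (i < N)%coq_nat -> (j < N)%coq_nat ->
     sumL (List.seq 0 N) (fun k => Rmult (v k i) (v k j)) = kron i j.
Local Open Scope ring_scope.
Lemma sumL_big a n (f : nat -> R) :
  sumL (List.seq a n) f = \big[GRing.add/GRing.zero]_(i <- iota a n) f i.
Proof.
elim: n a => [|n IH] a /=; first by rewrite big_nil.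
by rewrite big_cons IH.
Qed.

Lemma sumL_ord n (f : nat -> R) :
  sumL (List.seq 0 n) f = (\sum_(i < n) f i)%R.
Proof. by rewrite sumL_big -(big_mkord xpredT f) /index_iota subn0. Qed.

Lemma kron_mx n (k k' : 'I_n) : kron k k' = (1%:M : 'M[R]_n) k k'.
Proof. rewrite !mxE /kron; case: (eqVneq k k') => [->|ne].
 by rewrite Nat.eqb_refl.
 move/eqP: ne => ne.
 have : (nat_of_ord k <> k')%coq_nat by move=> h; apply: ne; apply: ord_inj.
 by move/Nat.eqb_neq => ->.
Qed.

Lemma ortho_complete : OC_stmt.
Proof.
move=> N v H i j Hi Hj.
pose V : 'M[R]_N := (\matrix_(k < N, i < N) v k i)%R.
have E : (V *m V^T = 1%:M)%R.
  apply/matrixP => k k'; rewrite -kron_mx -(H k k' (ltP (ltn_ord k)) (ltP (ltn_ord k'))).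
  rewrite sumL_ord !mxE. apply: eq_bigr => m _. by rewrite !mxE.
have E2 := mulmx1C E.
have Hi' : (i < N)%N by apply/ltP.
have Hj' : (j < N)%N by apply/ltP.
have := congr1 (fun M : 'M[R]_N => M (Ordinal Hi') (Ordinal Hj')) E2.
rewrite /= -kron_mx /= => <-.
rewrite sumL_ord !mxE. apply: eq_bigr => m _. by rewrite !mxE.
Qed.
End MC.


Lemma sumL_nil {A} (f:A->R) : sumL [] f = 0. Proof. reflexivity. Qed.
Lemma sumL_cons {A} a l (f:A->R) : sumL (a::l) f = f a + sumL l f. Proof. reflexivity. Qed.
Lemma sumL_app {A} l1 l2 (f:A->R) : sumL (l1++l2) f = sumL l1 f + sumL l2 f.
Proof. induction l1 as [|a l1 IH]; simpl app; rewrite ?sumL_nil, ?sumL_cons; [ring| rewrite IH; ring]. Qed.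
Lemma sumL_ext {A} l (f g:A->R) : (forall x, In x l -> f x = g x) -> sumL l f = sumL l g.
Proof. induction l as [|a l IH]; intros H; rewrite ?sumL_nil, ?sumL_cons; auto.
 rewrite H by (left; auto). rewrite IH; auto. intros; apply H; right; auto. Qed.
Lemma sumL_plus {A} l (f g:A->R) : sumL l (fun x => f x + g x) = sumL l f + sumL l g.
Proof. induction l as [|a l IH]; rewrite ?sumL_nil, ?sumL_cons; [ring|rewrite IH; ring]. Qed.
Lemma sumL_minus {A} l (f g:A->R) : sumL l (fun x => f x - g x) = sumL l f - sumL l g.
Proof. induction l as [|a l IH]; rewrite ?sumL_nil, ?sumL_cons; [ring|rewrite IH; ring]. Qed.
Lemma sumL_scal {A} l c (f:A->R) : sumL l (fun x => c * f x) = c * sumL l f.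
Proof. induction l as [|a l IH]; rewrite ?sumL_nil, ?sumL_cons; [ring|rewrite IH; ring]. Qed.
Lemma sumL_scalr {A} l c (f:A->R) : sumL l (fun x => f x * c) = sumL l f * c.
Proof. induction l as [|a l IH]; rewrite ?sumL_nil, ?sumL_cons; [ring|rewrite IH; ring]. Qed.
Lemma sumL_const {A} (l : list A) c : sumL l (fun _ => c) = INR (length l) * c.
Proof. induction l as [|a l IH]; rewrite ?sumL_nil, ?sumL_cons; simpl length; [simpl; ring|rewrite IH, S_INR; ring]. Qed.
Lemma sumL_le {A} l (f g:A->R) : (forall x, In x l -> f x <= g x) -> sumL l f <= sumL l g.
Proof. induction l as [|a l IH]; intros H; rewrite ?sumL_nil, ?sumL_cons; [lra|].
 assert (f a <= g a) by (apply H; left; auto).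
 assert (sumL l f <= sumL l g) by (apply IH; intros; apply H; right; auto). lra. Qed.
Lemma sumL_nonneg {A} l (f:A->R) : (forall x, In x l -> 0 <= f x) -> 0 <= sumL l f.
Proof. intros H. replace 0 with (sumL l (fun _ => 0)). apply sumL_le; auto.
 rewrite sumL_const; ring. Qed.
Lemma sumL_map {A B} (g : A -> B) l (f : B -> R) : sumL (map g l) f = sumL l (fun x => f (g x)).
Proof. induction l as [|a l IH]; simpl map; rewrite ?sumL_nil, ?sumL_cons; [auto|rewrite IH; auto]. Qed.
Lemma sumL_flat_map {A B} (g : A -> list B) l (f : B -> R) :
  sumL (flat_map g l) f = sumL l (fun x => sumL (g x) f).
Proof. induction l as [|a l IH]; simpl flat_map; rewrite ?sumL_nil, ?sumL_cons; [auto|rewrite sumL_app, IH; auto]. Qed.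
Lemma sumL_swap {A B} (l1 : list A) (l2 : list B) f :
  sumL l1 (fun a => sumL l2 (fun b => f a b)) = sumL l2 (fun b => sumL l1 (fun a => f a b)).
Proof. induction l1 as [|a l1 IH]; rewrite ?sumL_nil, ?sumL_cons.
 - rewrite (sumL_ext l2 _ (fun _ => 0)) by (intros; apply sumL_nil). rewrite sumL_const; ring.
 - rewrite IH, <- sumL_plus. apply sumL_ext; intros; rewrite sumL_cons; auto. Qed.
Lemma sumL_ge_term {A} l (f:A->R) x : (forall y, In y l -> 0 <= f y) -> In x l -> f x <= sumL l f.
Proof. induction l as [|a l IH]; intros H Hx; [destruct Hx|]. rewrite sumL_cons.
 destruct Hx as [->|Hx].
 - assert (0 <= sumL l f) by (apply sumL_nonneg; intros; apply H; right; auto). lra.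
 - assert (f x <= sumL l f) by (apply IH; auto; intros; apply H; right; auto).
   assert (0 <= f a) by (apply H; left; auto). lra. Qed.
Lemma sumL_zero {A} l (f:A->R) x : (forall y, In y l -> 0 <= f y) -> sumL l f = 0 -> In x l -> f x = 0.
Proof. intros H H0 Hx. assert (f x <= sumL l f) by (apply sumL_ge_term; auto).
 assert (0 <= f x) by auto. lra. Qed.

Lemma kron_sym i j : kron i j = kron j i.
Proof. unfold kron. rewrite Nat.eqb_sym. auto. Qed.

Lemma sumL_kron_in a n s (g : nat -> R) : (a <= s < a + n)%nat ->
  sumL (seq a n) (fun i => kron i s * g i) = g s.
Proof. revert a. induction n as [|n IH]; intros a Ha; [lia|]. simpl seq; rewrite sumL_cons.
 unfold kron at 1. destruct (Nat.eqb_spec a s) as [->|Hne].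
 - rewrite (sumL_ext _ _ (fun _ => 0)). rewrite sumL_const; ring.
   intros x Hx. apply in_seq in Hx. unfold kron. destruct (Nat.eqb_spec x s); [lia|ring].
 - rewrite IH by lia. ring. Qed.

Lemma sumL_kron N s (g : nat -> R) : (s < N)%nat ->
  sumL (seq 0 N) (fun i => kron i s * g i) = g s.
Proof. intros H. apply sumL_kron_in. lia. Qed.


Lemma upd_pt x s t c i : s <> t ->
  (upd x s t i - c) ^ 2 = (x i - c) ^ 2
     + kron i s * (((x s + x t)/2 - c)^2 - (x s - c)^2)
     + kron i t * (((x s + x t)/2 - c)^2 - (x t - c)^2).
Proof. intros Hst. unfold upd, kron.
 destruct (Nat.eqb_spec i s) as [E1|H1]; destruct (Nat.eqb_spec i t) as [E2|H2]; simpl; try (subst; lia); try subst i; ring. Qed.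

Lemma upd_sq N x s t c : (s < N)%nat -> (t < N)%nat -> s <> t ->
  sumL (seq 0 N) (fun i => (upd x s t i - c) ^ 2) =
  sumL (seq 0 N) (fun i => (x i - c) ^ 2) - (x s - x t)^2 / 2.
Proof. intros Hs Ht Hst.
 rewrite (sumL_ext _ _ _ (fun i _ => upd_pt x s t c i Hst)).
 rewrite !sumL_plus, !sumL_kron by auto. field. Qed.

Lemma upd_pt1 x s t i : s <> t ->
  upd x s t i = x i + kron i s * ((x s + x t)/2 - x s) + kron i t * ((x s + x t)/2 - x t).
Proof. intros Hst. unfold upd, kron.
 destruct (Nat.eqb_spec i s) as [E1|H1]; destruct (Nat.eqb_spec i t) as [E2|H2]; simpl; try (subst; lia); try subst i; ring. Qed.

Lemma upd_sum N x s t : (s < N)%nat -> (t < N)%nat -> s <> t ->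
  sumL (seq 0 N) (upd x s t) = sumL (seq 0 N) x.
Proof. intros Hs Ht Hst.
 rewrite (sumL_ext _ _ _ (fun i _ => upd_pt1 x s t i Hst)).
 rewrite !sumL_plus, !sumL_kron by auto. field. Qed.

Lemma subsets_len l A : In A (subsets l) -> (length A <= length l)%nat.
Proof. revert A; induction l as [|x l IH]; intros A H; simpl in H.
 - destruct H as [<-|[]]; simpl; lia.
 - apply in_app_or in H as [H|H].
   + apply in_map_iff in H as [B [<- HB]]. simpl. specialize (IH _ HB). lia.
   + specialize (IH _ H). simpl. lia. Qed.

Lemma subsets_incl l A : In A (subsets l) -> incl A l.
Proof. revert A; induction l as [|x l IH]; intros A H; simpl in H.
 - destruct H as [<-|[]]. apply incl_nil_l.
 - apply in_app_or in H as [H|H].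
   + apply in_map_iff in H as [B [<- HB]]. apply incl_cons. left; auto.
     apply incl_tl. auto.
   + apply incl_tl. auto. Qed.

Lemma subsets_nil_once l (u : R) :
  sumL (subsets l) (fun B => match B with [] => u | _ :: _ => 0 end) = u.
Proof. induction l as [|x l IH]; simpl subsets.
 - rewrite sumL_cons, sumL_nil; ring.
 - rewrite sumL_app, sumL_map, IH.
   rewrite sumL_const; ring. Qed.

Lemma subsets_prob p l :
  sumL (subsets l) (fun A => p ^ length A * (1 - p) ^ (length l - length A)) = 1.
Proof. induction l as [|x l IH]; simpl subsets.
 - rewrite sumL_cons, sumL_nil; simpl; ring.
 - rewrite sumL_app, sumL_map.
   set (P := fun A : list nat => p ^ length A * (1 - p) ^ (length l - length A)) in *.
   transitivity (sumL (subsets l) (fun A => p * P A) + sumL (subsets l) (fun A => (1-p) * P A)).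
   + f_equal; apply sumL_ext; intros A HA; unfold P; simpl length.
     * replace (S (length l) - S (length A))%nat with (length l - length A)%nat by lia. simpl. ring.
     * apply subsets_len in HA.
       replace (S (length l) - length A)%nat with (S (length l - length A)) by lia. simpl. ring.
   + rewrite !sumL_scal, IH. ring. Qed.


Lemma pow_le_one q k : 0 <= q <= 1 -> q ^ k <= 1.
Proof. intros H. rewrite <- (pow1 k). apply pow_incr. lra. Qed.

Fixpoint gg (q : R) (k : nat) : R := match k with O => 0 | S k => gg q k + q ^ k end.

Lemma gg_S' q k : gg q (S k) = 1 + q * gg q k.
Proof. induction k as [|k IH]. simpl; ring. cbn [gg] in *. simpl pow. nra. Qed.
Lemma gg_p q k : 1 - q ^ k = (1 - q) * gg q k.
Proof. induction k as [|k IH]. simpl; ring. simpl gg. simpl pow. nra. Qed.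
Lemma gg_nonneg q k : 0 <= q -> 0 <= gg q k.
Proof. intros Hq; induction k; simpl; [lra|]. pose proof (pow_le q k Hq). lra. Qed.
Lemma gg_le q k : 0 <= q <= 1 -> gg q k <= INR k.
Proof. intros Hq; induction k; simpl gg; [simpl; lra|]. rewrite S_INR.
 pose proof (pow_le q k (proj1 Hq)). assert (q ^ k <= 1) by (apply pow_le_one; lra). lra. Qed.
Lemma gg_ge q k : 0 <= q <= 1 -> INR k * q ^ k <= gg q k.
Proof. intros Hq; induction k; simpl gg; [simpl; lra|]. rewrite S_INR.
 pose proof (pow_le q k (proj1 Hq)). simpl pow.
 assert (INR k * q ^ k * q <= INR k * q ^ k). { assert (0 <= INR k * q ^ k) by (apply Rmult_le_pos; [apply pos_INR|auto]). nra. }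
 assert (q * q ^ k <= q ^ k) by nra.
 replace ((INR k + 1) * (q * q ^ k)) with (INR k * q ^ k * q + q * q ^ k) by ring. lra. Qed.
Lemma gg_ge1 q k : 0 <= q -> (1 <= k)%nat -> 1 <= gg q k.
Proof. intros Hq Hk. destruct k; [lia|]. rewrite gg_S'. pose proof (gg_nonneg q k Hq). nra. Qed.

Definition Tfun (p : R) (f : nat -> R) (l A : list nat) : R :=
  match A with [] => 0 | _ :: _ => p ^ length A * (1 - p) ^ (length l - length A) * maxL f A end.
Definition Ff p f l := sumL (subsets l) (Tfun p f l).

Lemma maxL_cons (f : nat -> R) x B : B <> [] -> maxL f (x :: B) = Rmax (f x) (maxL f B).
Proof. destruct B; [congruence|]. reflexivity. Qed.
Lemma maxL_nonneg (f : nat -> R) (A : list nat) : (forall t, 0 <= f t) -> 0 <= maxL f A.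
Proof. intros Hf. induction A as [|a A IH]; simpl; [lra|]. destruct A; auto.
 pose proof (Hf a). apply Rle_trans with (f a); auto. apply Rmax_l. Qed.
Lemma Ff_nonneg p f l : 0 <= p <= 1 -> (forall t, 0 <= f t) -> 0 <= Ff p f l.
Proof. intros Hp Hf. apply sumL_nonneg. intros A _. unfold Tfun. destruct A; [lra|].
 pose proof (maxL_nonneg f (n :: A) Hf).
 apply Rmult_le_pos; auto. apply Rmult_le_pos; apply pow_le; lra. Qed.

Lemma Rmax_comb p u w a b : 0 <= u -> 0 <= w -> u + w = p -> u * a + w * b <= p * Rmax a b.
Proof. intros. pose proof (Rmax_l a b). pose proof (Rmax_r a b). subst p. nra. Qed.

Lemma Ff_bound p f l : 0 <= p <= 1 -> (forall t, 0 <= f t) -> l <> [] ->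
  p * gg (1 - p) (length l) * sumL l f <= INR (length l) * Ff p f l.
Proof.
 intros Hp Hf. induction l as [|x l' IH]; intros Hl; [congruence|].
 destruct l' as [|y l''].
 - unfold Ff, Tfun. simpl. unfold sumL; simpl. lra.
 - set (l' := y :: l'') in *. assert (Hl' : l' <> []) by discriminate.
   specialize (IH Hl').
   set (q := 1 - p). set (n' := length l').
   assert (Hn' : (1 <= n')%nat) by (unfold n', l'; simpl; lia).
   clearbody l'.
   set (g' := gg q n').
   assert (Hg' : 1 <= g') by (apply gg_ge1; unfold q; lra || lia).
   assert (Hq : 0 <= q <= 1) by (unfold q; lra).
   destruct (Req_dec p 0) as [Hp0|Hp0].
   { rewrite Hp0. rewrite !Rmult_0_l. apply Rmult_le_pos. apply pos_INR. apply Ff_nonneg; auto. lra. }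
   set (gn := gg q (S n')).
   assert (Egn : gn = g' + q ^ n') by reflexivity.
   assert (Egn2 : gn = 1 + q * g') by (unfold gn, g'; apply gg_S').
   set (r := INR n' * gn / ((INR n' + 1) * g')).
   assert (HnR : 1 <= INR n') by (apply (le_INR 1); auto).
   assert (Hr1 : r <= 1).
   { unfold r. apply Rmult_le_reg_r with ((INR n' + 1) * g'). nra.
     field_simplify; [|nra]. pose proof (gg_ge q n' Hq). fold g' in H. nra. }
   assert (Hrq : q <= r).
   { unfold r. apply Rmult_le_reg_r with ((INR n' + 1) * g'). nra.
     field_simplify; [|nra]. pose proof (gg_le q n' Hq). fold g' in H. nra. }
   assert (HF : Ff p f (x :: l') >= ((1 - r) + q ^ n' * (p - 1 + r)) * f x + r * Ff p f l').
   { unfold Ff at 1. change (subsets (x :: l')) with (map (cons x) (subsets l') ++ subsets l'). rewrite sumL_app, sumL_map.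
     rewrite (sumL_ext (subsets l') (Tfun p f (x :: l')) (fun B => q * Tfun p f l' B)).
     2:{ intros B HB. apply subsets_len in HB. destruct B as [|b B]; unfold Tfun; [ring|].
         simpl length in *. fold n' in HB |- *.
         replace (S n' - S (length B))%nat with (S (n' - S (length B))) by lia.
         simpl pow. unfold q. ring. }
     rewrite sumL_scal.
     assert (Hmap : sumL (subsets l') (fun B => (1 - r) * f x * (p ^ length B * q ^ (n' - length B))
                   + match B with [] => q ^ n' * (p - 1 + r) * f x | _ :: _ => 0 end
                   + (r - q) * Tfun p f l' B)
             <= sumL (subsets l') (fun B => Tfun p f (x :: l') (x :: B))).
     { apply sumL_le. intros B HB. apply subsets_len in HB. fold n' in HB.
       unfold Tfun. simpl length. fold n'.
       replace (S n' - S (length B))%nat with (n' - length B)%nat by lia.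
       destruct B as [|b B].
       - simpl. rewrite Nat.sub_0_r. unfold q. right. ring.
       - rewrite (maxL_cons f x (b :: B)) by discriminate.
         set (PB := p ^ length (b :: B) * q ^ (n' - length (b :: B))).
         assert (0 <= PB) by (unfold PB; apply Rmult_le_pos; apply pow_le; lra).
         pose proof (Rmax_comb p (1 - r) (r - q) (f x) (maxL f (b :: B))).
         assert ((1 - r) * f x + (r - q) * maxL f (b :: B) <= p * Rmax (f x) (maxL f (b :: B)))
           by (apply H0; unfold q in *; lra).
         simpl pow. fold q. unfold PB in *.
         replace (p * p ^ length (b :: B) * q ^ (n' - length (b :: B)) * Rmax (f x) (maxL f (b :: B)))
           with (p ^ length (b :: B) * q ^ (n' - length (b :: B)) * (p * Rmax (f x) (maxL f (b :: B)))) by ring.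
         simpl length in *. set (Q := q ^ (n' - S (length B))) in *. set (P1 := p ^ length B) in *. change (p ^ S (length B)) with (p * P1) in *. apply Rle_trans with ((p * P1 * Q) * ((1 - r) * f x + (r - q) * maxL f (b :: B))). right; ring. apply Rle_trans with ((p * P1 * Q) * (p * Rmax (f x) (maxL f (b :: B)))). apply Rmult_le_compat_l; auto. right; ring. }
     rewrite !sumL_plus, sumL_scal, subsets_nil_once in Hmap.
     rewrite (sumL_scal _ (r - q)) in Hmap.
     pose proof (subsets_prob p l') as Hpr. fold n' q in Hpr.
     rewrite Hpr in Hmap. fold (Ff p f l') in Hmap |- *. lra. }
   simpl length. fold n'. rewrite S_INR. rewrite sumL_cons. fold gn.
   assert (Hfx : 0 <= f x) by auto.
   assert (Hcoef : (INR n' + 1) * ((1 - r) + q ^ n' * (p - 1 + r)) = p * gn).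
   { unfold r. assert (Hq1 : 1 - q ^ n' = p * g'). { unfold g'. rewrite gg_p. replace (1 - q) with p by (unfold q; ring). reflexivity. }
     replace (q ^ n') with (1 - p * g') by (rewrite <- Hq1; ring). rewrite Egn. replace (q ^ n') with (1 - p * g') by (rewrite <- Hq1; ring). field. nra. }
   assert (HrF : p * gn * sumL l' f <= (INR n' + 1) * r * Ff p f l').
   { unfold r. replace ((INR n' + 1) * (INR n' * gn / ((INR n' + 1) * g')) * Ff p f l')
       with (gn / g' * (INR n' * Ff p f l')) by (field; nra).
     fold n' in IH. fold q g' in IH.
     apply Rle_trans with (gn / g' * (p * g' * sumL l' f)).
     right. field. nra.
     apply Rmult_le_compat_l; auto. unfold Rdiv; apply Rmult_le_pos; [nra|]. left; apply Rinv_0_lt_compat; nra. }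
   nra.
Qed.


Lemma Rinv_INR_nonneg n : 0 <= / INR n.
Proof. destruct n. simpl. rewrite Rinv_0. lra. left. apply Rinv_0_lt_compat. apply lt_0_INR. lia. Qed.

Lemma nbrs_spec adj N s t : In t (nbrs adj N s) <-> (t < N)%nat /\ adj s t = true.
Proof. unfold nbrs. rewrite filter_In, in_seq. split; intros [H1 H2]; split; auto; lia. Qed.

Lemma nbrs_ne adj N s t : simple_graph adj -> In t (nbrs adj N s) -> t <> s.
Proof. intros [_ Hirr] H. apply nbrs_spec in H as [_ H]. intros ->. rewrite Hirr in H. discriminate. Qed.

Lemma nbrs_nonempty adj N s : (2 <= N)%nat -> connected_graph adj N -> (s < N)%nat ->
  (0 < length (nbrs adj N s))%nat.
Proof. intros HN Hc Hs.
 set (j := if Nat.eqb s 0 then 1%nat else 0%nat).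
 assert (Hj : (j < N)%nat /\ j <> s) by (unfold j; destruct (Nat.eqb_spec s 0); lia).
 destruct Hj as [Hj Hjs].
 pose proof (Hc s j Hs Hj) as H. apply clos_rt_rt1n in H.
 destruct H as [|y z [Hx [Hy Ha]] _]; [congruence|].
 destruct (nbrs adj N s) eqn:E; [|simpl; lia].
 assert (In y (nbrs adj N s)) by (apply nbrs_spec; auto). rewrite E in H. destruct H. Qed.

Lemma nbrs_INR_pos adj N s : (2 <= N)%nat -> connected_graph adj N -> (s < N)%nat ->
  0 < INR (length (nbrs adj N s)).
Proof. intros. apply lt_0_INR. apply nbrs_nonempty; auto. Qed.

Lemma const_of_conn adj N (v : nat -> R) : connected_graph adj N ->
  (forall s t, (s < N)%nat -> In t (nbrs adj N s) -> v s = v t) ->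
  forall i, (i < N)%nat -> v i = v 0%nat.
Proof. intros Hc Hv i Hi. assert (H0 : (0 < N)%nat) by lia.
 pose proof (Hc 0%nat i H0 Hi) as H. symmetry. clear Hi H0.
 induction H as [x y [Hx [Hy Ha]]| x | x y z _ IH1 _ IH2].
 - apply Hv; auto. apply nbrs_spec; auto.
 - reflexivity.
 - congruence.
Qed.

Lemma Rinv_nonneg x : 0 <= x -> 0 <= / x.
Proof. intros H. destruct (Req_dec x 0) as [->|Hx]. rewrite Rinv_0; lra.
 left; apply Rinv_0_lt_compat; lra. Qed.

Lemma per_s_ge p (f : nat -> R) l : 0 <= p <= 1 -> (forall t, 0 <= f t) ->
  / INR (length l) * sumL l f <=
  Ff p f l + (1 - p) ^ length l * (/ INR (length l) * sumL l f).
Proof. intros Hp Hf. destruct l as [|a l'].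
 - unfold Ff, Tfun, sumL. simpl. lra.
 - set (l := a :: l'). assert (Hl : l <> []) by discriminate.
   pose proof (Ff_bound p f l Hp Hf Hl) as H.
   assert (Hn : 0 < INR (length l)) by (apply lt_0_INR; unfold l; simpl; lia).
   assert (E : 1 - (1 - p) ^ length l = p * gg (1 - p) (length l)) by (rewrite gg_p; ring).
   assert (HS : 0 <= sumL l f) by (apply sumL_nonneg; auto).
   apply Rmult_le_reg_l with (INR (length l)); auto.
   replace (INR (length l) * (/ INR (length l) * sumL l f)) with (sumL l f) by (field; lra).
   replace (INR (length l) * (Ff p f l + (1 - p) ^ length l * (/ INR (length l) * sumL l f)))
     with (INR (length l) * Ff p f l + (1 - p) ^ length l * sumL l f) by (field; lra).
   nra.
Qed.

Lemma RSGG_ge_RRG N adj p x : 0 <= p <= 1 -> R_RG N adj x <= R_SGG N adj p x.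
Proof. intros Hp. unfold R_RG, R_SGG. apply Rmult_le_compat_l.
 { apply Rinv_nonneg. pose proof (pos_INR N). lra. }
 apply sumL_le. intros s _.
 apply (per_s_ge p (fun t => (x s - x t) ^ 2) (nbrs adj N s) Hp).
 intros; apply pow2_ge_0.
Qed.


Lemma maxL_le (f : nat -> R) (A : list nat) c : A <> [] -> (forall t, In t A -> f t <= c) -> maxL f A <= c.
Proof. induction A as [|a A IH]; intros HA H; [congruence|]. destruct A as [|b A'].
 - simpl. apply H; left; auto.
 - change (maxL f (a :: b :: A')) with (Rmax (f a) (maxL f (b :: A'))).
   apply Rmax_lub. apply H; left; auto. apply IH. discriminate. intros; apply H; right; auto. Qed.

Lemma maxL_attained (f : nat -> R) (A : list nat) y : In y A -> (forall t, In t A -> f t <= f y) -> maxL f A = f y.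
Proof. induction A as [|a A IH]; intros Hy H; [destruct Hy|]. destruct A as [|b A'].
 - destruct Hy as [->|[]]. reflexivity.
 - change (maxL f (a :: b :: A')) with (Rmax (f a) (maxL f (b :: A'))).
   destruct Hy as [->|Hy].
   + apply Rmax_left. apply maxL_le. discriminate. intros; apply H; right; auto.
   + rewrite IH; auto. apply Rmax_right. apply H; left; auto. intros; apply H; right; auto. Qed.

Section Step.
Variables (N : nat) (adj : nat -> nat -> bool) (p : R) (sel : (nat -> R) -> nat -> list nat -> nat) (a0 : nat -> R).
Hypotheses (HN : (2 <= N)%nat) (Hs : simple_graph adj) (Hc : connected_graph adj N) (Hsel : valid_selector sel).

Lemma step_id x :
  sumL (sgg_step N adj p sel x) (fun o => fst o * sqdist N a0 (snd o)) = sqdist N a0 x - R_SGG N adj p x.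
Proof.
 set (D := sqdist N a0 x).
 assert (HNp : 0 < INR N) by (apply lt_0_INR; lia).
 unfold sgg_step, R_SGG. rewrite sumL_flat_map.
 set (q := 1 - p).
 rewrite (sumL_ext _ _ (fun s => / INR N * (D - / 2 * (Ff p (fun t => (x s - x t) ^ 2) (nbrs adj N s)
      + q ^ length (nbrs adj N s) * (/ INR (length (nbrs adj N s)) * sumL (nbrs adj N s) (fun t => (x s - x t) ^ 2)))))).
 - rewrite sumL_scal, sumL_minus, sumL_const, length_seq, sumL_scal.
   unfold Ff, Tfun. fold q. field. lra.
 - intros s Hs'. apply in_seq in Hs'.
   set (Ns := nbrs adj N s). set (n := length Ns).
   assert (Hn : 0 < INR n) by (apply nbrs_INR_pos; auto; lia).
   set (f := fun t => (x s - x t) ^ 2).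
   rewrite sumL_flat_map.
   rewrite (sumL_ext _ _ (fun A => / INR N * (p ^ length A * q ^ (n - length A) * D - / 2 * Tfun p f Ns A
        - match A with [] => / 2 * q ^ n * (/ INR n * sumL Ns f) | _ :: _ => 0 end))).
   + rewrite sumL_scal, !sumL_minus, sumL_scal, subsets_nil_once.
     rewrite sumL_scalr. fold n. unfold q. rewrite subsets_prob. unfold Ff. fold q. field. all: try lra.
   + intros A HA. destruct A as [|a A'].
     * rewrite sumL_map. simpl length. rewrite Nat.sub_0_r.
       rewrite (sumL_ext _ _ (fun t => / INR N * q ^ n * / INR n * D - / INR N * q ^ n * / INR n * / 2 * f t)).
       -- rewrite sumL_minus, sumL_const, sumL_scal. fold n. unfold Tfun. field. split; lra.
       -- intros t Ht. simpl fst; simpl snd. unfold sqdist. rewrite upd_sq.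
          ++ fold (sqdist N a0 x). fold D. unfold f. unfold Rdiv. rewrite Rmult_minus_distr_l. f_equal. ring.
          ++ lia.
          ++ apply nbrs_spec in Ht; tauto.
          ++ intros E. apply (nbrs_ne adj N s t Hs Ht). auto.
     * set (A := a :: A') in *. assert (HAne : A <> []) by discriminate.
       destruct (Hsel x s A HAne) as [Hin Hmax].
       assert (Hin' : In (sel x s A) Ns) by (apply (subsets_incl Ns A HA); auto).
       rewrite sumL_cons, sumL_nil. simpl fst; simpl snd. unfold sqdist at 1. rewrite upd_sq.
       -- fold (sqdist N a0 x). fold D. unfold Tfun. unfold A at 1 2 3 4. fold A.
          rewrite (maxL_attained f A (sel x s A)); auto. unfold f. fold q n. change (length A) with (S (length A')). change (p ^ S (length A')) with (p * p ^ length A'). set (PP := p * p ^ length A' * q ^ (n - S (length A'))). set (Y := (x s - x (sel x s A)) ^ 2). unfold Rdiv. ring.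
       -- lia.
       -- apply nbrs_spec in Hin'; tauto.
       -- intros E. apply (nbrs_ne adj N s (sel x s A) Hs Hin'). auto.
Qed.
End Step.


Lemma sum_prod {A B} (l1 : list A) (l2 : list B) f g :
  sumL l1 f * sumL l2 g = sumL l1 (fun a => sumL l2 (fun b => f a * g b)).
Proof. rewrite <- sumL_scalr. apply sumL_ext; intros. rewrite <- sumL_scal. reflexivity. Qed.

Section Spec.
Variables (N : nat) (adj : nat -> nat -> bool).
Hypotheses (HN : (2 <= N)%nat) (Hs : simple_graph adj) (Hc : connected_graph adj N).

Definition Yq (y : nat -> R) := sumL (seq 0 N) (fun i => y i ^ 2).
Definition Wy (y : nat -> R) i := sumL (seq 0 N) (fun j => Wbar N adj i j * y j).
Definition Qf (y : nat -> R) := sumL (seq 0 N) (fun i => y i * Wy y i).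

Lemma Wst_apply s t i y : (s < N)%nat -> (t < N)%nat -> (i < N)%nat ->
  sumL (seq 0 N) (fun j => W_st s t i j * y j) = y i - / 2 * (kron i s - kron i t) * (y s - y t).
Proof. intros Hs' Ht Hi.
 rewrite (sumL_ext _ _ (fun j => kron j i * y j - (/ 2 * (kron i s - kron i t)) * (kron j s * y j - kron j t * y j))).
 - rewrite sumL_minus, sumL_scal, sumL_minus, !sumL_kron by auto. ring.
 - intros j _. unfold W_st. rewrite (kron_sym i j). ring. Qed.

Lemma Wst_quad s t y : (s < N)%nat -> (t < N)%nat ->
  sumL (seq 0 N) (fun i => y i * sumL (seq 0 N) (fun j => W_st s t i j * y j)) = Yq y - (y s - y t) ^ 2 / 2.
Proof. intros Hs' Ht.
 rewrite (sumL_ext _ _ (fun i => y i ^ 2 - (/ 2 * (y s - y t)) * (kron i s * y i - kron i t * y i))).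
 - rewrite sumL_minus, sumL_scal, sumL_minus, !sumL_kron by auto. unfold Yq. field.
 - intros i Hi. apply in_seq in Hi. rewrite Wst_apply by lia. ring. Qed.

Lemma Wy_expand y i : Wy y i = / INR N * sumL (seq 0 N) (fun s => / INR (length (nbrs adj N s)) *
   sumL (nbrs adj N s) (fun t => sumL (seq 0 N) (fun j => W_st s t i j * y j))).
Proof. unfold Wy, Wbar.
 rewrite (sumL_ext _ _ (fun j => / INR N * sumL (seq 0 N) (fun s => / INR (length (nbrs adj N s)) *
    sumL (nbrs adj N s) (fun t => W_st s t i j * y j)))).
 - rewrite sumL_scal. f_equal. rewrite sumL_swap. apply sumL_ext; intros s _.
   rewrite sumL_scal. f_equal. apply sumL_swap.
 - intros j _. rewrite Rmult_assoc. f_equal. rewrite <- sumL_scalr. apply sumL_ext; intros s _.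
   rewrite Rmult_assoc. f_equal. rewrite <- sumL_scalr. reflexivity.
Qed.

Lemma Q_expand y : Qf y = / INR N * sumL (seq 0 N) (fun s => / INR (length (nbrs adj N s)) *
   sumL (nbrs adj N s) (fun t => Yq y - (y s - y t) ^ 2 / 2)).
Proof. unfold Qf.
 rewrite (sumL_ext _ _ (fun i => / INR N * sumL (seq 0 N) (fun s => / INR (length (nbrs adj N s)) *
   sumL (nbrs adj N s) (fun t => y i * sumL (seq 0 N) (fun j => W_st s t i j * y j))))).
 - rewrite sumL_scal. f_equal. rewrite sumL_swap. apply sumL_ext; intros s Hs'.
   rewrite sumL_scal. f_equal. rewrite sumL_swap. apply sumL_ext; intros t Ht.
   apply in_seq in Hs'. apply nbrs_spec in Ht. apply Wst_quad; lia.
 - intros i _. rewrite Wy_expand.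
   transitivity (/ INR N * sumL (seq 0 N) (fun s => y i * (/ INR (length (nbrs adj N s)) *
     sumL (nbrs adj N s) (fun t => sumL (seq 0 N) (fun j => W_st s t i j * y j))))).
   + rewrite (sumL_scal (seq 0 N) (y i)). ring.
   + f_equal. apply sumL_ext; intros s _. rewrite (sumL_scal (nbrs adj N s) (y i)). ring.
Qed.

Lemma N_pos : 0 < INR N.
Proof. apply lt_0_INR. lia. Qed.

Lemma Q_simpl y : Qf y = Yq y - R_RG N adj y.
Proof. rewrite Q_expand. unfold R_RG.
 rewrite (sumL_ext _ _ (fun s => Yq y - / 2 * (/ INR (length (nbrs adj N s)) * sumL (nbrs adj N s) (fun t => (y s - y t) ^ 2)))).
 - rewrite sumL_minus, sumL_const, length_seq, sumL_scal. pose proof N_pos. field. lra.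
 - intros s Hs'. apply in_seq in Hs'. assert (Hn := nbrs_INR_pos adj N s HN Hc ltac:(lia)).
   unfold Rdiv. rewrite sumL_minus, sumL_const, sumL_scalr. field. lra.
Qed.

Lemma Y_ge_two y s t : (s < N)%nat -> (t < N)%nat -> s <> t -> y s ^ 2 + y t ^ 2 <= Yq y.
Proof. intros Hs' Ht Hst.
 replace (y s ^ 2 + y t ^ 2) with (sumL (seq 0 N) (fun i => kron i s * y i ^ 2 + kron i t * y i ^ 2)).
 - apply sumL_le. intros i _. pose proof (pow2_ge_0 (y i)). unfold kron.
   destruct (Nat.eqb_spec i s); destruct (Nat.eqb_spec i t); try lia; lra.
 - rewrite sumL_plus, !sumL_kron by auto. reflexivity.
Qed.

Lemma Yq_nonneg y : 0 <= Yq y.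
Proof. apply sumL_nonneg. intros; apply pow2_ge_0. Qed.

Lemma Q_nonneg y : 0 <= Qf y.
Proof. rewrite Q_expand. apply Rmult_le_pos. apply Rinv_nonneg; apply pos_INR.
 apply sumL_nonneg; intros s Hs'. apply Rmult_le_pos. apply Rinv_nonneg; apply pos_INR.
 apply sumL_nonneg; intros t Ht. apply in_seq in Hs'.
 assert (Hst : t <> s) by (apply (nbrs_ne adj N s t Hs Ht)).
 apply nbrs_spec in Ht. pose proof (Y_ge_two y s t ltac:(lia) ltac:(tauto) ltac:(auto)).
 assert ((y s - y t) ^ 2 / 2 <= y s ^ 2 + y t ^ 2) by (pose proof (pow2_ge_0 (y s + y t)); nra).
 lra.
Qed.

Lemma RRG_nonneg y : 0 <= R_RG N adj y.
Proof. unfold R_RG. apply Rmult_le_pos. apply Rinv_nonneg. pose proof (pos_INR N); lra.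
 apply sumL_nonneg; intros s _. apply Rmult_le_pos. apply Rinv_nonneg; apply pos_INR.
 apply sumL_nonneg; intros; apply pow2_ge_0. Qed.

Lemma Wbar_sym i j : Wbar N adj i j = Wbar N adj j i.
Proof. unfold Wbar. f_equal. apply sumL_ext; intros s _. f_equal. apply sumL_ext; intros t _.
 unfold W_st. rewrite (kron_sym i j). ring. Qed.

Lemma Wst_colsum s t j : (s < N)%nat -> (t < N)%nat -> (j < N)%nat ->
  sumL (seq 0 N) (fun i => W_st s t i j) = 1.
Proof. intros Hs' Ht Hj.
 rewrite (sumL_ext _ _ (fun i => kron i j * 1 - (/ 2 * (kron j s - kron j t)) * (kron i s * 1 - kron i t * 1))).
 - rewrite sumL_minus, sumL_scal, sumL_minus, !sumL_kron by auto. ring.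
 - intros i _. unfold W_st. ring. Qed.

Lemma Wbar_colsum j : (j < N)%nat -> sumL (seq 0 N) (fun i => Wbar N adj i j) = 1.
Proof. intros Hj. unfold Wbar. rewrite sumL_scal. rewrite sumL_swap.
 rewrite (sumL_ext _ _ (fun s => 1)).
 - rewrite sumL_const, length_seq. pose proof N_pos. field. lra.
 - intros s Hs'. apply in_seq in Hs'. rewrite sumL_scal, sumL_swap.
   rewrite (sumL_ext _ _ (fun t => 1)).
   + rewrite sumL_const. assert (Hn := nbrs_INR_pos adj N s HN Hc ltac:(lia)). field. lra.
   + intros t Ht. apply nbrs_spec in Ht. apply Wst_colsum; lia.
Qed.

Lemma Wy_one i : (i < N)%nat -> Wy (fun _ => 1) i = 1.
Proof. intros Hi. unfold Wy. transitivity (sumL (seq 0 N) (fun j => Wbar N adj j i)).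
 apply sumL_ext; intros j _. rewrite Wbar_sym. ring. apply Wbar_colsum; auto. Qed.
End Spec.


Section Eig.
Variables (N : nat) (adj : nat -> nat -> bool) (v : nat -> nat -> R) (mu : nat -> R).
Hypotheses (HN : (2 <= N)%nat) (Hs : simple_graph adj) (Hc : connected_graph adj N).
Hypothesis Hortho : forall k k', (k < N)%nat -> (k' < N)%nat ->
        sumL (seq 0 N) (fun i => v k i * v k' i) = kron k k'.
Hypothesis Heig : forall k i, (k < N)%nat -> (i < N)%nat ->
        sumL (seq 0 N) (fun j => Wbar N adj i j * v k j) = mu k * v k i.
Hypothesis Hmono : forall k, (S k < N)%nat -> mu (S k) <= mu k.
Hypothesis Hcompl : forall i j, (i < N)%nat -> (j < N)%nat ->
        sumL (seq 0 N) (fun k => v k i * v k j) = kron i j.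

Definition cc (y : nat -> R) k := sumL (seq 0 N) (fun j => v k j * y j).

Lemma parseval y z : sumL (seq 0 N) (fun i => y i * z i) = sumL (seq 0 N) (fun k => cc y k * cc z k).
Proof.
 transitivity (sumL (seq 0 N) (fun k => sumL (seq 0 N) (fun i => sumL (seq 0 N) (fun j => (v k i * y i) * (v k j * z j))))).
 2:{ apply sumL_ext; intros k _. unfold cc. rewrite sum_prod. reflexivity. }
 rewrite sumL_swap. apply sumL_ext; intros i Hi. rewrite sumL_swap.
 apply in_seq in Hi.
 transitivity (sumL (seq 0 N) (fun j => kron j i * (y i * z j))).
 - rewrite sumL_kron by lia. reflexivity.
 - apply sumL_ext; intros j Hj. apply in_seq in Hj.
   rewrite (sumL_ext _ _ (fun k => (y i * z j) * (v k i * v k j))) by (intros; ring).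
   rewrite sumL_scal, Hcompl by lia. rewrite kron_sym. ring.
Qed.

Lemma cWy y k : (k < N)%nat -> cc (Wy N adj y) k = mu k * cc y k.
Proof. intros Hk. unfold cc, Wy.
 transitivity (sumL (seq 0 N) (fun i => sumL (seq 0 N) (fun j => v k i * (Wbar N adj i j * y j)))).
 { apply sumL_ext; intros i _. rewrite <- sumL_scal. reflexivity. }
 rewrite sumL_swap. rewrite <- sumL_scal. apply sumL_ext; intros j Hj. apply in_seq in Hj.
 transitivity (y j * sumL (seq 0 N) (fun i => Wbar N adj j i * v k i)).
 - rewrite <- sumL_scal. apply sumL_ext; intros i _. rewrite Wbar_sym. ring.
 - rewrite Heig by lia. ring.
Qed.

Lemma Q_eig y : Qf N adj y = sumL (seq 0 N) (fun k => cc y k * (mu k * cc y k)).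
Proof. unfold Qf. rewrite parseval. apply sumL_ext; intros k Hk. apply in_seq in Hk.
 rewrite cWy by lia. reflexivity. Qed.

Lemma mu_Q k : (k < N)%nat -> Qf N adj (v k) = mu k.
Proof. intros Hk. unfold Qf, Wy.
 rewrite (sumL_ext _ _ (fun i => mu k * (v k i * v k i))).
 - rewrite sumL_scal, Hortho by auto. unfold kron. rewrite Nat.eqb_refl. ring.
 - intros i Hi. apply in_seq in Hi. rewrite Heig by lia. ring. Qed.

Lemma Yq_v k : (k < N)%nat -> Yq N (v k) = 1.
Proof. intros Hk. unfold Yq. rewrite (sumL_ext _ _ (fun i => v k i * v k i)) by (intros; ring).
 rewrite Hortho by auto. unfold kron. rewrite Nat.eqb_refl. ring. Qed.

Lemma mu_range k : (k < N)%nat -> 0 <= mu k <= 1.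
Proof. intros Hk. rewrite <- mu_Q by auto. split. apply Q_nonneg; auto.
 rewrite Q_simpl by auto. rewrite Yq_v by auto. pose proof (RRG_nonneg N adj (v k)). lra. Qed.

Lemma mono_chain k : (1 <= k)%nat -> (k < N)%nat -> mu k <= mu 1%nat.
Proof. induction k as [|k IH]; intros H1 H2; [lia|].
 destruct (Nat.eq_dec k 0) as [->|Hk]; [lra|].
 pose proof (Hmono k H2). assert (mu k <= mu 1%nat) by (apply IH; lia). lra. Qed.

Lemma seq0N : seq 0 N = 0%nat :: seq 1 (N - 1).
Proof. destruct N as [|n] eqn:E; [lia|]. simpl. rewrite Nat.sub_0_r. reflexivity. Qed.

Lemma main_bound y : sumL (seq 0 N) y = 0 -> Qf N adj y <= mu 1%nat * Yq N y.
Proof. intros Hy.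
 destruct (Rle_dec 1 (mu 1%nat)) as [Hge|Hlt].
 - rewrite Q_simpl by auto. pose proof (RRG_nonneg N adj y). pose proof (Yq_nonneg N y). nra.
 - apply Rnot_le_lt in Hlt.
   set (one := fun _ : nat => 1).
   assert (Hd : forall k, (1 <= k)%nat -> (k < N)%nat -> cc one k = 0).
   { intros k H1 H2. assert (E : cc (Wy N adj one) k = cc one k).
     { unfold cc. apply sumL_ext; intros j Hj. apply in_seq in Hj. rewrite Wy_one by (auto; lia). reflexivity. }
     rewrite cWy in E by auto. pose proof (mono_chain k H1 H2).
     assert ((mu k - 1) * cc one k = 0) by lra.
     apply Rmult_integral in H0 as [H0|H0]; [lra|auto]. }
   assert (HN1 : INR N = cc one 0%nat * cc one 0%nat).
   { transitivity (sumL (seq 0 N) (fun i => one i * one i)).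
     - rewrite (sumL_ext _ _ (fun _ => 1)) by (intros; unfold one; ring). rewrite sumL_const, length_seq. ring.
     - rewrite parseval. rewrite seq0N, sumL_cons.
       rewrite (sumL_ext (seq 1 (N - 1)) _ (fun _ => 0)).
       + rewrite sumL_const. ring.
       + intros k Hk. apply in_seq in Hk. rewrite Hd by lia. ring. }
   assert (Hc0 : cc y 0%nat = 0).
   { assert (E : 0 = cc y 0%nat * cc one 0%nat).
     { rewrite <- Hy. transitivity (sumL (seq 0 N) (fun i => y i * one i)).
       - apply sumL_ext; intros; unfold one; ring.
       - rewrite parseval. rewrite seq0N, sumL_cons.
         rewrite (sumL_ext (seq 1 (N - 1)) _ (fun _ => 0)).
         + rewrite sumL_const. ring.
         + intros k Hk. apply in_seq in Hk. rewrite Hd by lia. ring. }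
     assert (0 < INR N) by (apply lt_0_INR; lia).
     assert (cc one 0%nat <> 0) by (intros E2; rewrite E2 in HN1; lra).
     symmetry in E. apply Rmult_integral in E as [E|E]; [auto|contradiction]. }
   rewrite Q_eig. assert (HY : Yq N y = sumL (seq 0 N) (fun k => cc y k * cc y k)).
   { unfold Yq. rewrite <- parseval. apply sumL_ext; intros; ring. }
   rewrite HY. rewrite <- sumL_scal. rewrite seq0N, !sumL_cons. rewrite Hc0.
   assert (sumL (seq 1 (N - 1)) (fun k => cc y k * (mu k * cc y k)) <=
           sumL (seq 1 (N - 1)) (fun k => mu 1%nat * (cc y k * cc y k))).
   { apply sumL_le. intros k Hk. apply in_seq in Hk. pose proof (mono_chain k ltac:(lia) ltac:(lia)).
     pose proof (pow2_ge_0 (cc y k)). simpl in H0. nra. }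
   lra.
Qed.

Lemma RRG_zero_const w : R_RG N adj w = 0 -> forall i, (i < N)%nat -> w i = w 0%nat.
Proof. intros H0. apply (const_of_conn adj N w Hc).
 intros s t Hs' Ht.
 unfold R_RG in H0. assert (HN0 : 0 < INR N) by (apply lt_0_INR; lia).
 apply Rmult_integral in H0 as [H0|H0]. { exfalso. assert (0 < / (2 * INR N)) by (apply Rinv_0_lt_compat; lra). lra. }
 assert (Hs1 : In s (seq 0 N)) by (apply in_seq; lia).
 assert (Hnn : forall s', In s' (seq 0 N) -> 0 <= / INR (length (nbrs adj N s')) *
      sumL (nbrs adj N s') (fun t0 => (w s' - w t0) ^ 2)).
 { intros. apply Rmult_le_pos. apply Rinv_nonneg; apply pos_INR. apply sumL_nonneg; intros; apply pow2_ge_0. }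
 pose proof (sumL_zero _ _ s Hnn H0 Hs1) as E. simpl in E.
 apply Rmult_integral in E as [E|E].
 { exfalso. pose proof (nbrs_INR_pos adj N s HN Hc Hs'). assert (0 < / INR (length (nbrs adj N s))) by (apply Rinv_0_lt_compat; lra). lra. }
 pose proof (sumL_zero _ _ t (fun _ _ => pow2_ge_0 _) E Ht) as E2. simpl in E2.
 nra.
Qed.

Lemma lam_lt_1 : mu 1%nat < 1.
Proof.
 destruct (Rlt_dec (mu 1%nat) 1) as [H|H]; auto. exfalso. apply Rnot_lt_le in H.
 assert (H1 : mu 1%nat = 1) by (pose proof (mu_range 1 ltac:(lia)); lra).
 assert (H0 : mu 0%nat = 1) by (pose proof (mu_range 0 ltac:(lia)); pose proof (Hmono 0 ltac:(lia)); lra).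
 assert (Hz : forall k, (k < N)%nat -> mu k = 1 -> forall i, (i < N)%nat -> v k i = v k 0%nat).
 { intros k Hk Hmu. apply RRG_zero_const.
   pose proof (mu_Q k Hk). rewrite Q_simpl in H2 by auto. rewrite Yq_v in H2 by auto. lra. }
 set (a := v 0%nat 0%nat). set (b := v 1%nat 0%nat).
 assert (HN0 : 0 < INR N) by (apply lt_0_INR; lia).
 assert (E01 : INR N * (a * b) = 0).
 { replace (INR N * (a * b)) with (sumL (seq 0 N) (fun i => v 0%nat i * v 1%nat i)).
   rewrite Hortho by lia. reflexivity.
   rewrite (sumL_ext _ _ (fun _ => a * b)). rewrite sumL_const, length_seq; ring.
   intros i Hi. apply in_seq in Hi. rewrite (Hz 0%nat), (Hz 1%nat) by (auto; lia). reflexivity. }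
 assert (E00 : INR N * (a * a) = 1).
 { replace (INR N * (a * a)) with (sumL (seq 0 N) (fun i => v 0%nat i * v 0%nat i)).
   rewrite Hortho by lia. reflexivity.
   rewrite (sumL_ext _ _ (fun _ => a * a)). rewrite sumL_const, length_seq; ring.
   intros i Hi. apply in_seq in Hi. rewrite (Hz 0%nat) by (auto; lia). reflexivity. }
 assert (E11 : INR N * (b * b) = 1).
 { replace (INR N * (b * b)) with (sumL (seq 0 N) (fun i => v 1%nat i * v 1%nat i)).
   rewrite Hortho by lia. reflexivity.
   rewrite (sumL_ext _ _ (fun _ => b * b)). rewrite sumL_const, length_seq; ring.
   intros i Hi. apply in_seq in Hi. rewrite (Hz 1%nat) by (auto; lia). reflexivity. }
 assert ((INR N * (a * b)) * (INR N * (a * b)) = (INR N * (a * a)) * (INR N * (b * b))) by ring.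
 rewrite E01, E00, E11 in H2. lra.
Qed.
End Eig.


Section Exp.
Variables (N : nat) (adj : nat -> nat -> bool) (p : R) (sel : (nat -> R) -> nat -> list nat -> nat) (a0 : nat -> R).
Hypotheses (HN : (2 <= N)%nat) (Hs : simple_graph adj) (Hc : connected_graph adj N) (Hp : 0 <= p <= 1)
  (Hsel : valid_selector sel).

Lemma step_inv x o : In o (sgg_step N adj p sel x) ->
  0 <= fst o /\ exists s t, (s < N)%nat /\ In t (nbrs adj N s) /\ snd o = upd x s t.
Proof. intros H. unfold sgg_step in H. apply in_flat_map in H as [s [Hs' H]].
 apply in_flat_map in H as [A [HA H]]. apply in_seq in Hs'.
 assert (HNi : 0 <= / INR N) by apply Rinv_INR_nonneg.
 destruct A as [|a A'].
 - apply in_map_iff in H as [t [<- Ht]]. cbn [fst snd]. split.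
   + apply Rmult_le_pos; [apply Rmult_le_pos; auto; apply pow_le; lra|apply Rinv_INR_nonneg].
   + exists s, t. repeat split; auto. lia.
 - destruct H as [<-|[]]. cbn [fst snd]. split.
   + apply Rmult_le_pos; auto. apply Rmult_le_pos; apply pow_le; lra.
   + exists s, (sel x s (a :: A')). repeat split; auto. lia.
     destruct (Hsel x s (a :: A') ltac:(discriminate)) as [Hin _].
     apply (subsets_incl _ _ HA); auto.
Qed.

Lemma dist_inv l wx : In wx (sgg_dist N adj p sel a0 l) ->
  0 <= fst wx /\ sumL (seq 0 N) (snd wx) = sumL (seq 0 N) a0.
Proof. revert wx. induction l as [|l IH]; intros wx H.
 - destruct H as [<-|[]]. simpl. split; auto; lra.
 - simpl in H. apply in_flat_map in H as [wy [Hwy H]]. apply in_map_iff in H as [o [<- Ho]].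
   destruct (IH wy Hwy) as [H1 H2]. destruct (step_inv _ _ Ho) as [H3 [s [t [Hs' [Ht E]]]]].
   simpl. split. apply Rmult_le_pos; auto.
   rewrite E. rewrite upd_sum; auto. apply nbrs_spec in Ht; tauto.
   intros E2. apply (nbrs_ne adj N s t Hs Ht). auto.
Qed.

Lemma expect_S l f : expect N adj p sel a0 (S l) f =
  expect N adj p sel a0 l (fun x => sumL (sgg_step N adj p sel x) (fun o => fst o * f (snd o))).
Proof. unfold expect. simpl sgg_dist. rewrite sumL_flat_map. apply sumL_ext; intros wx _.
 rewrite sumL_map. rewrite <- sumL_scal. apply sumL_ext; intros; simpl; ring. Qed.

Lemma expect_ext l f g : (forall wx, In wx (sgg_dist N adj p sel a0 l) -> f (snd wx) = g (snd wx)) ->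
  expect N adj p sel a0 l f = expect N adj p sel a0 l g.
Proof. intros H. unfold expect. apply sumL_ext; intros wx Hwx. rewrite H; auto. Qed.

Lemma expect_le l f g : (forall wx, In wx (sgg_dist N adj p sel a0 l) -> f (snd wx) <= g (snd wx)) ->
  expect N adj p sel a0 l f <= expect N adj p sel a0 l g.
Proof. intros H. unfold expect. apply sumL_le; intros wx Hwx.
 apply Rmult_le_compat_l. apply (dist_inv l wx Hwx). auto. Qed.

Lemma expect_minus l f g : expect N adj p sel a0 l (fun x => f x - g x) =
  expect N adj p sel a0 l f - expect N adj p sel a0 l g.
Proof. unfold expect. rewrite <- sumL_minus. apply sumL_ext; intros; ring. Qed.

Lemma expect_plus l f g : expect N adj p sel a0 l (fun x => f x + g x) =
  expect N adj p sel a0 l f + expect N adj p sel a0 l g.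
Proof. unfold expect. rewrite <- sumL_plus. apply sumL_ext; intros; ring. Qed.

Lemma expect_scal l c f : expect N adj p sel a0 l (fun x => c * f x) = c * expect N adj p sel a0 l f.
Proof. unfold expect. rewrite <- sumL_scal. apply sumL_ext; intros; ring. Qed.

Lemma expect_nonneg l f : (forall x, 0 <= f x) -> 0 <= expect N adj p sel a0 l f.
Proof. intros H. unfold expect. apply sumL_nonneg. intros wx Hwx.
 apply Rmult_le_pos; auto. apply (dist_inv l wx Hwx). Qed.

Lemma sqdist_nonneg x : 0 <= sqdist N a0 x.
Proof. apply sumL_nonneg; intros; apply pow2_ge_0. Qed.

Lemma Err_nonneg l : 0 <= Err N adj p sel a0 l.
Proof. apply expect_nonneg. apply sqdist_nonneg. Qed.

Lemma eta_nonneg l : 0 <= eta N adj p sel a0 l.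
Proof. apply expect_nonneg. intros x. pose proof (RSGG_ge_RRG N adj p x Hp). lra. Qed.

Lemma Err_S l : Err N adj p sel a0 (S l) =
  expect N adj p sel a0 l (fun x => sqdist N a0 x - R_SGG N adj p x).
Proof. unfold Err. rewrite expect_S. apply expect_ext. intros wx _.
 apply step_id; auto. Qed.

Variables (v : nat -> nat -> R) (mu : nat -> R).
Hypothesis Hortho : forall k k', (k < N)%nat -> (k' < N)%nat ->
        sumL (seq 0 N) (fun i => v k i * v k' i) = kron k k'.
Hypothesis Heig : forall k i, (k < N)%nat -> (i < N)%nat ->
        sumL (seq 0 N) (fun j => Wbar N adj i j * v k j) = mu k * v k i.
Hypothesis Hmono : forall k, (S k < N)%nat -> mu (S k) <= mu k.
Hypothesis Hcompl : forall i j, (i < N)%nat -> (j < N)%nat ->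
        sumL (seq 0 N) (fun k => v k i * v k j) = kron i j.

Lemma state_bound x : sumL (seq 0 N) x = sumL (seq 0 N) a0 ->
  sqdist N a0 x - R_RG N adj x <= mu 1%nat * sqdist N a0 x.
Proof. intros Hx.
 set (y := fun i => x i - avg N a0).
 assert (E1 : sqdist N a0 x = Yq N y) by reflexivity.
 assert (E2 : R_RG N adj x = R_RG N adj y).
 { unfold R_RG. f_equal. apply sumL_ext; intros s _. f_equal. apply sumL_ext; intros t _.
   unfold y. ring. }
 assert (Hy : sumL (seq 0 N) y = 0).
 { unfold y. rewrite sumL_minus, sumL_const, length_seq, Hx. unfold avg.
   assert (0 < INR N) by (apply lt_0_INR; lia). field. lra. }
 rewrite E1, E2. rewrite <- Q_simpl by auto.
 apply (main_bound N adj v mu); auto.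
Qed.

Lemma rec_bound l : Err N adj p sel a0 (S l) + eta N adj p sel a0 (S l) <= mu 1%nat * Err N adj p sel a0 l.
Proof. rewrite Err_S. unfold eta. replace (S l - 1)%nat with l by lia.
 rewrite <- expect_plus. rewrite (expect_ext _ _ (fun x => sqdist N a0 x - R_RG N adj x)).
 2:{ intros; ring. }
 unfold Err. rewrite <- expect_scal. apply expect_le.
 intros wx Hwx. apply state_bound. apply (dist_inv l wx Hwx).
Qed.
End Exp.


Lemma prodL_app {A} l1 l2 (f : A -> R) : prodL (l1 ++ l2) f = prodL l1 f * prodL l2 f.
Proof. induction l1 as [|a l1 IH]; simpl app; unfold prodL in *; simpl; [ring|rewrite IH; ring]. Qed.

Lemma prodL_le_pow (L : list nat) g c : (forall i, In i L -> 0 <= g i <= c) ->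
  0 <= prodL L g <= c ^ length L.
Proof. induction L as [|a L IH]; intros H; unfold prodL in *; simpl; [lra|].
 destruct (H a (or_introl eq_refl)) as [H1 H2].
 destruct IH as [IH1 IH2]. intros; apply H; right; auto.
 split. apply Rmult_le_pos; auto. apply Rmult_le_compat; auto. Qed.

Lemma fold_min_le (g : nat -> R) b L i : In i L -> fold_right (fun i acc => Rmin (g i) acc) b L <= g i.
Proof. induction L as [|a L IH]; intros H; [destruct H|]. simpl. destruct H as [->|H].
 apply Rmin_l. eapply Rle_trans; [apply Rmin_r|auto]. Qed.

Lemma fold_min_nonneg (g : nat -> R) b L : 0 <= b -> (forall i, In i L -> 0 <= g i) ->
  0 <= fold_right (fun i acc => Rmin (g i) acc) b L.
Proof. induction L as [|a L IH]; intros Hb H; simpl; auto.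
 apply Rmin_glb. apply H; left; auto. apply IH; auto. intros; apply H; right; auto. Qed.

Section Fin.
Variables (N : nat) (adj : nat -> nat -> bool) (p : R) (sel : (nat -> R) -> nat -> list nat -> nat) (a0 : nat -> R).
Hypotheses (HN : (2 <= N)%nat) (Hs : simple_graph adj) (Hc : connected_graph adj N) (Hp : 0 <= p <= 1)
  (Hsel : valid_selector sel).
Variables (v : nat -> nat -> R) (mu : nat -> R).
Hypothesis Hortho : forall k k', (k < N)%nat -> (k' < N)%nat ->
        sumL (seq 0 N) (fun i => v k i * v k' i) = kron k k'.
Hypothesis Heig : forall k i, (k < N)%nat -> (i < N)%nat ->
        sumL (seq 0 N) (fun j => Wbar N adj i j * v k j) = mu k * v k i.
Hypothesis Hmono : forall k, (S k < N)%nat -> mu (S k) <= mu k.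
Hypothesis Hcompl : forall i j, (i < N)%nat -> (j < N)%nat ->
        sumL (seq 0 N) (fun k => v k i * v k j) = kron i j.

Notation Er := (Err N adj p sel a0).
Notation bt := (beta N adj p sel a0).
Notation lam := (mu 1%nat).

Lemma lam_nonneg : 0 <= lam.
Proof. apply (mu_range N adj v mu); auto; lia. Qed.

Lemma beta_props l : 0 <= bt (S l) /\ Er (S l) <= (lam - bt (S l)) * Er l /\ 0 <= lam - bt (S l).
Proof.
 assert (R : Er (S l) + eta N adj p sel a0 (S l) <= lam * Er l) by (eapply rec_bound; eauto).
 assert (He : 0 <= eta N adj p sel a0 (S l)) by (eapply eta_nonneg; eauto).
 assert (HE1 : 0 <= Er (S l)) by (eapply Err_nonneg; eauto).
 assert (HE0 : 0 <= Er l) by (eapply Err_nonneg; eauto).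
 pose proof lam_nonneg.
 unfold beta. replace (S l - 1)%nat with l by lia.
 destruct (Rlt_dec 0 (Er l)) as [Hpos|Hnp].
 - set (e := eta N adj p sel a0 (S l)) in *.
   split; [|split].
   + unfold Rdiv. apply Rmult_le_pos; auto. left; apply Rinv_0_lt_compat; auto.
   + replace ((lam - e / Er l) * Er l) with (lam * Er l - e) by (field; lra). lra.
   + assert (e / Er l <= lam).
     { apply Rmult_le_reg_r with (Er l); auto. replace (e / Er l * Er l) with e by (field; lra). lra. }
     lra.
 - assert (Er l = 0) by lra. rewrite H0 in *. split; [lra|split; [|lra]]. nra.
Qed.

Lemma Err_prod l : Er l <= sqdist N a0 a0 * prodL (seq 1 l) (fun i => lam - bt i).
Proof. induction l as [|l IH].
 - unfold Err, expect, prodL, sumL. simpl. lra.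
 - rewrite seq_S, prodL_app. replace (1 + l)%nat with (S l) by lia.
   destruct (beta_props l) as [_ [H1 H2]].
   unfold prodL at 2. simpl fold_right.
   assert (0 <= Er l) by (eapply Err_nonneg; eauto).
   apply Rle_trans with ((lam - bt (S l)) * Er l); auto.
   replace (sqdist N a0 a0 * (prodL (seq 1 l) (fun i => lam - bt i) * ((lam - bt (S l)) * 1)))
     with ((lam - bt (S l)) * (sqdist N a0 a0 * prodL (seq 1 l) (fun i => lam - bt i))) by ring.
   apply Rmult_le_compat_l; auto.
Qed.

Lemma beta_in l i : In i (seq 1 l) -> 0 <= bt i /\ 0 <= lam - bt i.
Proof. intros H. apply in_seq in H. destruct i as [|i]; [lia|].
 destruct (beta_props i) as [H1 [_ H2]]. auto. Qed.

Lemma minb_nonneg l : (1 <= l)%nat -> 0 <= min_beta N adj p sel a0 l.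
Proof. intros Hl. unfold min_beta. apply fold_min_nonneg.
 - destruct l as [|l]; [lia|]. destruct (beta_props l); auto.
 - intros i Hi. apply (beta_in l i Hi). Qed.

Lemma prod_le_pow l : (1 <= l)%nat ->
  0 <= prodL (seq 1 l) (fun i => lam - bt i) <= (lam - min_beta N adj p sel a0 l) ^ l.
Proof. intros Hl. replace ((lam - min_beta N adj p sel a0 l) ^ l) with ((lam - min_beta N adj p sel a0 l) ^ length (seq 1 l)) by (rewrite length_seq; auto). apply prodL_le_pow.
 intros i Hi. destruct (beta_in l i Hi) as [H1 H2]. split; auto.
 unfold min_beta. pose proof (fold_min_le bt (bt l) (seq 1 l) i Hi). lra. Qed.
End Fin.


Lemma markov N adj p sel a0 l eps : 0 <= p <= 1 -> (2 <= N)%nat -> simple_graph adj -> connected_graph adj N -> valid_selector sel ->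
  0 < eps -> 0 < sqdist N a0 a0 ->
  prob_ratio_ge N adj p sel a0 l eps <= Err N adj p sel a0 l / (eps ^ 2 * sqdist N a0 a0).
Proof. intros Hp HN Hs Hc Hsel He Hd0.
 unfold prob_ratio_ge, Err, expect, Rdiv. rewrite <- sumL_scalr. apply sumL_le. intros wx Hwx.
 assert (Hw : 0 <= fst wx) by (eapply dist_inv; eauto).
 set (D := sqdist N a0 (snd wx)). set (d0 := sqdist N a0 a0).
 assert (HD : 0 <= D) by (apply sumL_nonneg; intros; apply pow2_ge_0).
 assert (Hk : 0 < eps ^ 2 * d0) by (apply Rmult_lt_0_compat; auto; apply pow_lt; auto).
 assert (0 <= / (eps ^ 2 * d0)) by (left; apply Rinv_0_lt_compat; auto).
 destruct (Rle_dec eps (sqrt D * / sqrt d0)) as [Hle|Hle].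
 - assert (Hsd : 0 < sqrt d0) by (apply sqrt_lt_R0; auto).
   assert (H2 : eps ^ 2 <= (sqrt D / sqrt d0) ^ 2) by (apply pow_incr; split; [lra|exact Hle]).
   replace ((sqrt D / sqrt d0) ^ 2) with (sqrt D ^ 2 / sqrt d0 ^ 2) in H2 by (field; lra).
   rewrite (pow2_sqrt D) in H2 by lra. rewrite (pow2_sqrt d0) in H2 by (left; exact Hd0).
   assert (H3 : eps ^ 2 * d0 <= D).
   { apply Rmult_le_reg_r with (/ d0). apply Rinv_0_lt_compat; auto.
     replace (eps ^ 2 * d0 * / d0) with (eps ^ 2) by (field; apply Rgt_not_eq; exact Hd0). exact H2. }
   assert (1 <= D * / (eps ^ 2 * d0)).
   { apply Rmult_le_reg_r with (eps ^ 2 * d0); auto. rewrite Rmult_assoc, Rinv_l by lra. lra. }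
   replace (fst wx * D * / (eps ^ 2 * d0)) with (fst wx * (D * / (eps ^ 2 * d0))) by ring.
   rewrite <- (Rmult_1_r (fst wx)) at 1. apply Rmult_le_compat_l; auto.
 - apply Rmult_le_pos; auto. apply Rmult_le_pos; auto.
Qed.

Definition OCs := forall N (v : nat -> nat -> R),
  (forall k k', (k < N)%nat -> (k' < N)%nat ->
     sumL (seq 0 N) (fun i => v k i * v k' i) = kron k k') ->
  forall i j, (i < N)%nat -> (j < N)%nat ->
     sumL (seq 0 N) (fun k => v k i * v k j) = kron i j.

Theorem theorem3_core (OC : OCs) (N : nat) (adj : nat -> nat -> bool) (p : R)
    (sel : (nat -> R) -> nat -> list nat -> nat) (a0 : nat -> R) (lam : R) :
  (2 <= N)%nat ->
  simple_graph adj ->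
  connected_graph adj N ->
  0 <= p <= 1 ->
  valid_selector sel ->
  (exists i, (i < N)%nat /\ a0 i <> avg N a0) ->
  is_lambda2 N (Wbar N adj) lam ->
  forall l : nat, (1 <= l)%nat ->
    0 <= beta N adj p sel a0 l /\
    Err N adj p sel a0 l <= (lam - beta N adj p sel a0 l) * Err N adj p sel a0 (l - 1) /\
    Err N adj p sel a0 l
      <= sqdist N a0 a0 * prodL (seq 1 l) (fun i => lam - beta N adj p sel a0 i) /\
    sqdist N a0 a0 * prodL (seq 1 l) (fun i => lam - beta N adj p sel a0 i)
      <= sqdist N a0 a0 * (lam - min_beta N adj p sel a0 l) ^ l /\
    (forall eps, 0 < eps < 1 ->
       prob_ratio_ge N adj p sel a0 l eps
         <= / eps ^ 2 * (lam - min_beta N adj p sel a0 l) ^ l) /\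
    (forall eps, 0 < eps < 1 ->
       0 < lam - min_beta N adj p sel a0 l ->
       INR l >= 3 * ln (/ eps) / ln (/ (lam - min_beta N adj p sel a0 l)) ->
       prob_ratio_ge N adj p sel a0 l eps <= eps).
Proof.
 intros HN Hs Hc Hp Hsel [i0 [Hi0 Ha0]] [v [mu [Hortho [Heig [Hmono ->]]]]] l Hl.
 pose proof (OC N v Hortho) as Hcompl.
 assert (Hd0 : 0 < sqdist N a0 a0).
 { assert (Hx : a0 i0 - avg N a0 <> 0) by lra.
   assert (0 < (a0 i0 - avg N a0) ^ 2).
   { replace ((a0 i0 - avg N a0) ^ 2) with (Rsqr (a0 i0 - avg N a0)) by (unfold Rsqr; ring).
     apply Rsqr_pos_lt; auto. }
   eapply Rlt_le_trans; [exact H|]. unfold sqdist.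
   apply (sumL_ge_term _ (fun i => (a0 i - avg N a0) ^ 2)). intros; apply pow2_ge_0.
   apply in_seq; lia. }
 destruct l as [|l']; [lia|].
 pose proof (beta_props N adj p sel a0 HN Hs Hc Hp Hsel v mu Hortho Heig Hmono Hcompl l') as [B1 [B2 B3]].
 pose proof (Err_prod N adj p sel a0 HN Hs Hc Hp Hsel v mu Hortho Heig Hmono Hcompl (S l')) as EP.
 pose proof (prod_le_pow N adj p sel a0 HN Hs Hc Hp Hsel v mu Hortho Heig Hmono Hcompl (S l') ltac:(lia)) as [P1 P2].
 pose proof (minb_nonneg N adj p sel a0 HN Hs Hc Hp Hsel v mu Hortho Heig Hmono Hcompl (S l') ltac:(lia)) as MB.
 pose proof (lam_lt_1 N adj v mu HN Hs Hc Hortho Heig Hmono) as L1.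
 set (rho := mu 1%nat - min_beta N adj p sel a0 (S l')) in *.
 set (P := prodL (seq 1 (S l')) (fun i => mu 1%nat - beta N adj p sel a0 i)) in *.
 assert (H4 : sqdist N a0 a0 * P <= sqdist N a0 a0 * rho ^ S l') by (apply Rmult_le_compat_l; lra).
 assert (H5 : forall eps, 0 < eps < 1 -> prob_ratio_ge N adj p sel a0 (S l') eps <= / eps ^ 2 * rho ^ S l').
 { intros eps He. eapply Rle_trans. apply markov; auto; lra.
   assert (0 < eps ^ 2) by (apply pow_lt; lra).
   apply Rmult_le_reg_r with (eps ^ 2 * sqdist N a0 a0). apply Rmult_lt_0_compat; auto.
   replace (Err N adj p sel a0 (S l') / (eps ^ 2 * sqdist N a0 a0) * (eps ^ 2 * sqdist N a0 a0))
     with (Err N adj p sel a0 (S l')) by (field; split; lra).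
   replace (/ eps ^ 2 * rho ^ S l' * (eps ^ 2 * sqdist N a0 a0)) with (sqdist N a0 a0 * rho ^ S l')
     by (field; lra). lra. }
 split; [auto|]. split; [replace (S l' - 1)%nat with l' by lia; auto|].
 split; [auto|]. split; [auto|]. split; [auto|].
 intros eps He Hrho Hl'.
 assert (Hr1 : rho < 1) by (unfold rho; lra).
 assert (Hlr : 0 < ln (/ rho)).
 { rewrite ln_Rinv by auto. assert (ln rho < ln 1) by (apply ln_increasing; lra). rewrite ln_1 in H. lra. }
 assert (Hpow : rho ^ S l' <= eps ^ 3).
 { assert (Hk : 3 * ln (/ eps) <= INR (S l') * ln (/ rho)).
   { apply Rge_le in Hl'. apply Rmult_le_reg_r with (/ ln (/ rho)). apply Rinv_0_lt_compat; auto.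
     replace (INR (S l') * ln (/ rho) * / ln (/ rho)) with (INR (S l')) by (field; lra). exact Hl'. }
   rewrite !ln_Rinv in Hk by lra.
   assert (Hln : ln (rho ^ S l') <= ln (eps ^ 3)).
   { rewrite !ln_pow by lra. simpl (INR 3). lra. }
   destruct (Rle_dec (rho ^ S l') (eps ^ 3)) as [Hok|Hno]; auto.
   apply Rnot_le_lt in Hno. assert (ln (eps ^ 3) < ln (rho ^ S l')) by (apply ln_increasing; auto; apply pow_lt; lra).
   lra. }
 eapply Rle_trans; [apply H5; auto|].
 assert (0 < eps ^ 2) by (apply pow_lt; lra).
 apply Rle_trans with (/ eps ^ 2 * eps ^ 3).
 apply Rmult_le_compat_l; auto. left; apply Rinv_0_lt_compat; auto.
 right. field. lra.
Qed.


Theorem theorem3 (N : nat) (adj : nat -> nat -> bool) (p : R)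
    (sel : (nat -> R) -> nat -> list nat -> nat) (a0 : nat -> R) (lam : R) :
  (2 <= N)%nat ->
  simple_graph adj ->
  connected_graph adj N ->
  0 <= p <= 1 ->
  valid_selector sel ->
  (exists i, (i < N)%nat /\ a0 i <> avg N a0) ->
  is_lambda2 N (Wbar N adj) lam ->
  forall l : nat, (1 <= l)%nat ->
    0 <= beta N adj p sel a0 l /\
    Err N adj p sel a0 l <= (lam - beta N adj p sel a0 l) * Err N adj p sel a0 (l - 1) /\
    Err N adj p sel a0 l
      <= sqdist N a0 a0 * prodL (seq 1 l) (fun i => lam - beta N adj p sel a0 i) /\
    sqdist N a0 a0 * prodL (seq 1 l) (fun i => lam - beta N adj p sel a0 i)
      <= sqdist N a0 a0 * (lam - min_beta N adj p sel a0 l) ^ l /\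
    (forall eps, 0 < eps < 1 ->
       prob_ratio_ge N adj p sel a0 l eps
         <= / eps ^ 2 * (lam - min_beta N adj p sel a0 l) ^ l) /\
    (forall eps, 0 < eps < 1 ->
       0 < lam - min_beta N adj p sel a0 l ->
       INR l >= 3 * ln (/ eps) / ln (/ (lam - min_beta N adj p sel a0 l)) ->
       prob_ratio_ge N adj p sel a0 l eps <= eps).
Proof.
  exact (theorem3_core MC.ortho_complete N adj p sel a0 lam).
Qed.
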